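(* Let $b>1$, $g_0(t)=b^j$ for $j<t\leq j+1$ ($j\in\mathbb{N}_0$), $\lambda_b=\left(\arccos\frac1{R_b}\right)^2$ with $R_b=\frac{b^{1/2}+b^{-1/2}}2$. Let $\omega$ be a nonzero function on $\mathbb{R}_+$ with $\omega(0)>0$ satisfying in the distributional sense $-(g_0\omega')'=\lambda_bg_0\omega$ together with $\omega'(0)=0$, $\omega(j+)=\omega(j-)$ and $\omega'(j-)=b\,\omega'(j+)$ for all $j\in\mathbb{N}$. Then there exist constants $0<C_1<C_2<\infty$ such that \[ C_1\frac{1+t}{\sqrt{g_0(t)}}\leq\omega(t)\leq C_2\frac{1+t}{\sqrt{g_0(t)}},\qquad t\geq0. \] *)

(* Defs.v *)
From Stdlib Require Export Reals.
From Coquelicot Require Export Coquelicot.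
Open Scope R_scope.

(* g_0(t) = b^j for j < t <= j+1 (j in N_0); floor1 t is the integer j with
   j < t <= j+1.  At t = 0 (not covered by the paper's formula) we set
   g_0(0) = 1 = b^0, the right limit. *)
Definition g0 (b t : R) : R :=
  if Rle_dec t 0 then 1 else b ^ (Z.to_nat (floor1 t)).

Definition R_b (b : R) : R := (sqrt b + / sqrt b) / 2.

Definition lambda_b (b : R) : R := (acos (/ R_b b)) ^ 2.

(* Main.v *)
Require Import Defs.
From Stdlib Require Import Reals Lra Psatz ZArith Lia.
From Coquelicot Require Import Coquelicot.
Open Scope R_scope.

Lemma lim_eps (T : Type) (F : (T -> Prop) -> Prop) (FF : Filter F) (f : T -> R) l :
  filterlim f F (locally l) -> forall eps, 0 < eps -> F (fun x => Rabs (f x - l) < eps).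
Proof.
  intros H eps He. exact (proj1 (filterlim_locally f l) H (mkposreal eps He)).
Qed.

Lemma lim_unique (F : (R -> Prop) -> Prop) (FF : ProperFilter F) (f : R -> R) (l1 l2 : R) :
  filterlim f F (locally l1) -> filterlim f F (locally l2) -> l1 = l2.
Proof.
  intros H1 H2. destruct (Req_dec l1 l2) as [e|n]; [exact e|].
  assert (He : 0 < Rabs (l1 - l2) / 2) by (assert (l1 - l2 <> 0) by lra; pose proof (Rabs_pos_lt _ H); lra).
  pose proof (lim_eps _ F _ f l1 H1 _ He) as A1.
  pose proof (lim_eps _ F _ f l2 H2 _ He) as A2.
  destruct (Hierarchy.filter_ex _ (filter_and _ _ A1 A2)) as [x [B1 B2]].
  exfalso. revert B1 B2 He. split_Rabs; lra.
Qed.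

Lemma at_right_le x : filter_le (at_right x) (locally x).
Proof. intros P HP. unfold at_right, within. apply filter_imp with (2 := HP). auto. Qed.
Lemma at_left_le x : filter_le (at_left x) (locally x).
Proof. intros P HP. unfold at_left, within. apply filter_imp with (2 := HP). auto. Qed.

Lemma cont_right (f : R -> R) (x : R) : continuous f x -> filterlim f (at_right x) (locally (f x)).
Proof. intros H. exact (filterlim_filter_le_1 _ (at_right_le x) H). Qed.
Lemma cont_left (f : R -> R) (x : R) : continuous f x -> filterlim f (at_left x) (locally (f x)).
Proof. intros H. exact (filterlim_filter_le_1 _ (at_left_le x) H). Qed.

Lemma left_lim_agree lo hi (f g : R -> R) (l : R) :
  lo < hi -> (forall t, lo < t < hi -> f t = g t) -> continuous g hi ->
  filterlim f (at_left hi) (locally l) -> l = g hi.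
Proof.
  intros Hlh Heq Hg Hf.
  apply (lim_unique (at_left hi) (at_left_proper_filter hi) f); auto.
  apply filterlim_ext_loc with g.
  - unfold at_left, within, locally. exists (mkposreal (hi - lo) ltac:(lra)).
    intros y Hy Hy'. simpl in Hy. unfold ball in Hy; simpl in Hy; unfold AbsRing_ball, abs, minus, plus, opp in Hy; simpl in Hy.
    symmetry; apply Heq. revert Hy. split_Rabs; lra.
  - now apply cont_left.
Qed.

Lemma key (th lo hi : R) (w p dp : R -> R) :
  0 < th -> lo < hi ->
  (forall t, lo < t < hi -> ex_derive w t /\ ex_derive (Derive w) t /\
       Derive (Derive w) t = - th ^ 2 * w t) ->
  (forall t, is_derive p t (dp t)) -> (forall t, is_derive dp t (- th ^ 2 * p t)) ->
  filterlim w (at_right lo) (locally (p lo)) ->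
  filterlim (Derive w) (at_right lo) (locally (dp lo)) ->
  forall t, lo < t < hi -> w t = p t /\ Derive w t = dp t.
Proof.
  intros Hth Hlh Hode Hp Hdp Hw Hdw t Ht.
  set (E := fun x => th ^ 2 * (w x - p x) ^ 2 + (Derive w x - dp x) ^ 2).
  assert (HE : forall x, lo < x < hi -> is_derive E x 0).
  { intros x Hx. destruct (Hode x Hx) as [H1 [H2 H3]].
    apply Derive_correct in H1. apply Derive_correct in H2. rewrite H3 in H2.
    pose proof (is_derive_plus _ _ _ _ _
       (is_derive_scal _ _ (th^2) _ (is_derive_pow _ 2 _ _ (is_derive_minus _ _ _ _ _ H1 (Hp x))))
       (is_derive_pow _ 2 _ _ (is_derive_minus _ _ _ _ _ H2 (Hdp x)))) as H.
    unfold E. eapply is_derive_ext.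
    2: { replace 0 with (plus (th ^ 2 * (INR 2 * minus (Derive w x) (dp x) * minus (w x) (p x) ^ Init.Nat.pred 2))
            (INR 2 * minus (- th ^ 2 * w x) (- th ^ 2 * p x) * minus (Derive w x) (dp x) ^ Init.Nat.pred 2)).
         exact H. unfold minus, plus, opp; simpl. ring. }
    intros y. unfold minus, plus, opp; simpl. ring. }
  assert (Hconst : forall x, lo < x < t -> E t = E x).
  { intros x Hx.
    destruct (MVT_gen E x t (fun _ => 0)) as [c [_ Hc]].
    - intros y Hy. rewrite Rmin_left in Hy by lra. rewrite Rmax_right in Hy by lra.
      apply HE; lra.
    - intros y Hy. rewrite Rmin_left in Hy by lra. rewrite Rmax_right in Hy by lra.
      apply continuity_pt_filterlim. apply (ex_derive_continuous (K:=R_AbsRing) (V:=R_NormedModule)). exists 0. apply HE; lra.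
    - lra. }
  assert (Hsmall : forall eps, 0 < eps -> E t < eps).
  { intros eps He.
    set (rho := Rmin 1 (eps / (th ^ 2 + 1))).
    assert (Hr : 0 < rho). { unfold rho. apply Rmin_pos. lra. apply Rdiv_lt_0_compat. lra. nra. }
    assert (Hr1 : rho <= 1) by apply Rmin_l.
    assert (Hr2 : rho <= eps / (th ^ 2 + 1)) by apply Rmin_r.
    assert (Hr3 : rho * (th ^ 2 + 1) <= eps).
    { apply Rmult_le_compat_r with (r := th^2+1) in Hr2; [|nra]. field_simplify in Hr2; [lra|nra]. }
    assert (Hr2' : 0 < rho / 2) by lra.
    pose proof (lim_eps _ _ _ _ _ Hw _ Hr2') as A1.
    pose proof (lim_eps _ _ _ _ _ Hdw _ Hr2') as A2.
    pose proof (lim_eps _ _ _ _ _ (cont_right p lo (ex_derive_continuous (K:=R_AbsRing) (V:=R_NormedModule) _ _ (ex_intro _ _ (Hp lo)))) _ Hr2') as A3.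
    pose proof (lim_eps _ _ _ _ _ (cont_right dp lo (ex_derive_continuous (K:=R_AbsRing) (V:=R_NormedModule) _ _ (ex_intro _ _ (Hdp lo)))) _ Hr2') as A4.
    assert (A5 : at_right lo (fun x => lo < x < t)).
    { unfold at_right, within, locally. exists (mkposreal (t - lo) ltac:(lra)).
      intros y Hy Hy'. simpl in Hy. unfold ball in Hy; simpl in Hy; unfold AbsRing_ball, abs, minus, plus, opp in Hy; simpl in Hy.
      revert Hy. split_Rabs; lra. }
    destruct (Hierarchy.filter_ex _ (filter_and _ _ A5 (filter_and _ _ A1 (filter_and _ _ A2 (filter_and _ _ A3 A4)))))
      as [x [Hx [B1 [B2 [B3 B4]]]]].
    rewrite (Hconst x Hx). unfold E.
    assert (U1 : Rabs (w x - p x) < rho) by (revert B1 B3; split_Rabs; lra).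
    assert (U2 : Rabs (Derive w x - dp x) < rho) by (revert B2 B4; split_Rabs; lra).
    assert (V1 : (w x - p x) ^ 2 <= rho ^ 2).
    { rewrite <- (pow2_abs (w x - p x)). pose proof (Rabs_pos (w x - p x)). nra. }
    assert (V2 : (Derive w x - dp x) ^ 2 < rho ^ 2).
    { rewrite <- (pow2_abs (Derive w x - dp x)). pose proof (Rabs_pos (Derive w x - dp x)). nra. }
    assert (rho ^ 2 <= rho) by nra.
    assert (0 <= th ^ 2) by nra.
    assert (th ^ 2 * (w x - p x) ^ 2 <= th ^ 2 * rho ^ 2) by nra.
    assert (th ^ 2 * rho ^ 2 + rho ^ 2 <= rho * (th ^ 2 + 1)) by nra.
    lra. }
  assert (E0 : E t = 0).
  { assert (0 <= E t) by (unfold E; pose proof (pow2_ge_0 th); pose proof (pow2_ge_0 (w t - p t)); pose proof (pow2_ge_0 (Derive w t - dp t)); nra).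
    destruct (Req_dec (E t) 0) as [e|n]; auto. specialize (Hsmall (E t)). lra. }
  unfold E in E0. assert (0 < th ^ 2) by nra.
  pose proof (pow2_ge_0 (w t - p t)). pose proof (pow2_ge_0 (Derive w t - dp t)).
  assert (Z1 : (w t - p t) ^ 2 = 0) by nra. assert (Z2 : (Derive w t - dp t) ^ 2 = 0) by nra.
  split; nra.
Qed.

Definition ss (sg : R) := (sg ^ 2 - 1) / (sg ^ 2 + 1).
Definition cc (sg : R) := 2 * sg / (sg ^ 2 + 1).

Definition pj (w0 sg th : R) (j : nat) (t : R) : R :=
  w0 / sg ^ j * ((1 + INR j * ss sg) * cos (th * (t - INR j))
                 - (INR j * ss sg / sg) * sin (th * (t - INR j))).
Definition dpj (w0 sg th : R) (j : nat) (t : R) : R :=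
  w0 / sg ^ j * th * (- (1 + INR j * ss sg) * sin (th * (t - INR j))
                 - (INR j * ss sg / sg) * cos (th * (t - INR j))).

Lemma pj_der w0 sg th j t : is_derive (pj w0 sg th j) t (dpj w0 sg th j t).
Proof. unfold pj, dpj. auto_derive; auto. unfold Rminus. ring. Qed.
Lemma dpj_der w0 sg th j t : is_derive (dpj w0 sg th j) t (- th ^ 2 * pj w0 sg th j t).
Proof. unfold pj, dpj. auto_derive; auto. unfold Rminus. ring. Qed.

Lemma pj_at w0 sg th j : pj w0 sg th j (INR j) = w0 / sg ^ j * (1 + INR j * ss sg).
Proof. unfold pj. rewrite Rminus_diag, Rmult_0_r, cos_0, sin_0. ring. Qed.
Lemma dpj_at w0 sg th j : dpj w0 sg th j (INR j) = - (w0 / sg ^ j * th * (INR j * ss sg / sg)).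
Proof. unfold dpj. rewrite Rminus_diag, Rmult_0_r, cos_0, sin_0. ring. Qed.

Lemma pj_step w0 sg th j : 0 < sg -> cos th = cc sg -> sin th = ss sg ->
  pj w0 sg th j (INR j + 1) = pj w0 sg th (S j) (INR (S j)).
Proof.
  intros Hs Hc Hn. rewrite pj_at. unfold pj.
  replace (th * (INR j + 1 - INR j)) with th by ring. rewrite Hc, Hn, S_INR.
  unfold cc, ss. simpl. field. repeat split; try nra. apply pow_nonzero; lra.
Qed.
Lemma dpj_step w0 sg th j : 0 < sg -> cos th = cc sg -> sin th = ss sg ->
  dpj w0 sg th j (INR j + 1) = sg ^ 2 * dpj w0 sg th (S j) (INR (S j)).
Proof.
  intros Hs Hc Hn. rewrite dpj_at. unfold dpj.
  replace (th * (INR j + 1 - INR j)) with th by ring. rewrite Hc, Hn, S_INR.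
  unfold cc, ss. simpl. field. repeat split; try nra. apply pow_nonzero; lra.
Qed.
Theorem lemma4p2 (b : R) (omega : R -> R) :
  1 < b ->
  (exists t, 0 <= t /\ omega t <> 0) ->
  0 < omega 0 ->
  (forall (j : nat) (t : R), INR j < t < INR j + 1 ->
     ex_derive omega t /\ ex_derive (Derive omega) t /\
     Derive (Derive omega) t = - lambda_b b * omega t) ->
  filterlim omega (at_right 0) (locally (omega 0)) ->
  (forall t, 0 < t -> continuous omega t) ->
  filterlim (Derive omega) (at_right 0) (locally 0) ->
  (forall j : nat, (1 <= j)%nat -> exists l : R,
     filterlim (Derive omega) (at_right (INR j)) (locally l) /\
     filterlim (Derive omega) (at_left (INR j)) (locally (b * l))) ->
  exists C1 C2 : R, 0 < C1 /\ C1 < C2 /\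
    forall t : R, 0 <= t ->
      C1 * (1 + t) / sqrt (g0 b t) <= omega t /\
      omega t <= C2 * (1 + t) / sqrt (g0 b t).
Proof.
  intros Hb _ H0 Hode Hr0 Hcont Hd0 Hjump.
  set (sg := sqrt b).
  assert (Hsgb : sg * sg = b) by (apply sqrt_sqrt; lra).
  assert (Hsg : 1 < sg).
  { unfold sg. rewrite <- sqrt_1. apply sqrt_lt_1_alt. lra. }
  set (th := acos (/ R_b b)).
  assert (Hinv : / R_b b = cc sg).
  { unfold R_b, cc. fold sg. field. split; [nra | lra]. }
  assert (Hcc : 0 < cc sg < 1).
  { unfold cc. split. apply Rdiv_lt_0_compat; nra.
    apply Rmult_lt_reg_r with (sg ^ 2 + 1). nra. field_simplify; nra. }
  assert (Hss : 0 < ss sg < 1).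
  { unfold ss. split. apply Rdiv_lt_0_compat; nra.
    apply Rmult_lt_reg_r with (sg ^ 2 + 1). nra. field_simplify; nra. }
  assert (Hc : cos th = cc sg). { unfold th. rewrite Hinv. apply cos_acos. lra. }
  assert (Hs : sin th = ss sg).
  { unfold th. rewrite Hinv. rewrite sin_acos by lra.
    replace (1 - (cc sg)²) with (ss sg)². apply sqrt_Rsqr; lra.
    unfold Rsqr, cc, ss. field. nra. }
  assert (Hthb : 0 <= th <= PI) by apply acos_bound.
  assert (Hth : 0 < th).
  { destruct (Req_dec th 0) as [e|n]; [|lra]. rewrite e, cos_0 in Hc. lra. }
  assert (Hth2 : th <= PI / 2).
  { destruct (Rle_dec th (PI/2)) as [h|h]; auto. exfalso.
    assert (cos th < 0) by (apply cos_lt_0; pose proof PI_RGT_0; lra). lra. }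
  set (w0 := omega 0).
  assert (Hode' : forall (j : nat) (t : R), INR j < t < INR j + 1 ->
     ex_derive omega t /\ ex_derive (Derive omega) t /\
     Derive (Derive omega) t = - th ^ 2 * omega t) by exact Hode.
  set (P := fun j => filterlim omega (at_right (INR j)) (locally (pj w0 sg th j (INR j))) /\
      filterlim (Derive omega) (at_right (INR j)) (locally (dpj w0 sg th j (INR j)))).
  assert (Hin : forall j, P j -> forall t, INR j < t < INR j + 1 ->
     omega t = pj w0 sg th j t /\ Derive omega t = dpj w0 sg th j t).
  { intros j [A1 A2].
    exact (key th (INR j) (INR j + 1) omega (pj w0 sg th j) (dpj w0 sg th j) Hth ltac:(lra)
      (Hode' j) (pj_der w0 sg th j) (dpj_der w0 sg th j) A1 A2). }
  assert (Hend : forall j, P j -> omega (INR j + 1) = pj w0 sg th j (INR j + 1)).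
  { intros j Pj. apply (left_lim_agree (INR j) (INR j + 1) omega (pj w0 sg th j)).
    lra. intros t Ht; apply (proj1 (Hin j Pj t Ht)).
    apply (ex_derive_continuous (K:=R_AbsRing) (V:=R_NormedModule)). eexists; apply pj_der.
    apply cont_left. apply Hcont. pose proof (pos_INR j); lra. }
  assert (HP : forall j, P j).
  { induction j as [|j IH].
    - unfold P. change (INR 0) with 0.
      replace (pj w0 sg th 0 0) with (omega 0).
      replace (dpj w0 sg th 0 0) with 0. split; auto.
      change 0 with (INR 0) at 2. rewrite dpj_at. simpl. field. lra.
      change 0 with (INR 0) at 2. rewrite pj_at. unfold w0. simpl. field.
    - split.
      + replace (pj w0 sg th (S j) (INR (S j))) with (omega (INR (S j))).
        apply cont_right, Hcont. rewrite S_INR. pose proof (pos_INR j); lra.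
        rewrite <- pj_step by (auto; lra). rewrite S_INR. apply Hend, IH.
      + destruct (Hjump (S j)) as [l [Hl1 Hl2]]. lia.
        replace (dpj w0 sg th (S j) (INR (S j))) with l. exact Hl1.
        assert (E : b * l = sg ^ 2 * dpj w0 sg th (S j) (INR (S j))).
        { rewrite <- dpj_step by (auto; lra). rewrite S_INR in Hl2.
          apply (left_lim_agree (INR j) (INR j + 1) (Derive omega) (dpj w0 sg th j)); auto. lra.
          intros t Ht; apply (proj2 (Hin j IH t Ht)).
          apply (ex_derive_continuous (K:=R_AbsRing) (V:=R_NormedModule)). eexists; apply dpj_der. }
        rewrite <- Hsgb in E. apply Rmult_eq_reg_l with (sg ^ 2). rewrite <- E. ring. nra. }
  assert (HQ : forall j t, INR j < t <= INR j + 1 -> omega t = pj w0 sg th j t).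
  { intros j t [Ht1 Ht2]. destruct (Req_dec t (INR j + 1)) as [e|n].
    - subst t. apply Hend, HP.
    - apply (Hin j (HP j)). lra. }
  exists (w0 * ss sg / (2 * sg)), (2 * w0).
  assert (Hw0 : 0 < w0) by exact H0.
  assert (HC1 : 0 < w0 * ss sg / (2 * sg)). { apply Rdiv_lt_0_compat; nra. }
  split; [exact HC1|]. split.
  { apply Rmult_lt_reg_r with (2 * sg). lra. field_simplify; nra. }
  intros t Ht. destruct (Req_dec t 0) as [e|Htp].
  { subst t. unfold g0. destruct (Rle_dec 0 0) as [_|h]; [|lra].
    rewrite sqrt_1. fold w0. split.
    - apply Rmult_le_reg_r with (2 * sg). lra. field_simplify; nra.
    - lra. }
  assert (Htp' : 0 < t) by lra.
  destruct (floor1_ex t) as [z Hz] eqn:Ef.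
  assert (Hfl : floor1 t = z) by (unfold floor1; rewrite Ef; reflexivity).
  assert (Hz0 : (0 <= z)%Z). { assert (Hm : (-1 < z)%Z) by (apply lt_IZR; simpl; lra). lia. }
  set (n := Z.to_nat z).
  assert (Hn : INR n = IZR z). { unfold n. rewrite INR_IZR_INZ, Z2Nat.id; auto. }
  assert (Hg : g0 b t = b ^ n).
  { unfold g0. destruct (Rle_dec t 0) as [h|_]; [lra|]. rewrite Hfl. reflexivity. }
  assert (Hsq : sqrt (g0 b t) = sg ^ n).
  { rewrite Hg. rewrite <- Hsgb. replace ((sg * sg) ^ n) with ((sg ^ n) ^ 2).
    apply sqrt_pow2. apply pow_le. lra.
    rewrite Rpow_mult_distr. ring. }
  rewrite Hsq. rewrite (HQ n t) by lra.
  set (x := t - INR n). set (J := INR n).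
  assert (Hx : 0 < x <= 1) by (unfold x, J; lra).
  assert (HJ : 0 <= J) by apply pos_INR.
  assert (Hcx : cc sg <= cos (th * x)).
  { rewrite <- Hc. destruct (Req_dec x 1) as [e|ne].
    rewrite e, Rmult_1_r. lra.
    left. apply cos_decreasing_1; nra. }
  assert (Hcx1 : cos (th * x) <= 1) by apply COS_bound.
  assert (Hsx : sin (th * x) <= ss sg).
  { rewrite <- Hs. destruct (Req_dec x 1) as [e|ne].
    rewrite e, Rmult_1_r. lra.
    left. apply sin_increasing_1; pose proof PI_RGT_0; nra. }
  assert (Hsx0 : 0 <= sin (th * x)) by (apply sin_ge_0; nra).
  set (f := (1 + J * ss sg) * cos (th * x) - (J * ss sg / sg) * sin (th * x)).
  assert (Hpj : pj w0 sg th n t = w0 * f / sg ^ n).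
  { unfold pj, f, x, J. field. split; [lra|]. apply pow_nonzero; lra. }
  assert (Hpos : 0 < sg ^ n) by (apply pow_lt; lra).
  assert (HJs : 0 <= J * ss sg / sg) by (apply Rdiv_le_0_compat; nra).
  assert (Hf1 : (1 + J * ss sg) * cc sg - (J * ss sg / sg) * ss sg <= f).
  { unfold f. assert (0 <= 1 + J * ss sg) by nra.
    assert ((1 + J * ss sg) * cc sg <= (1 + J * ss sg) * cos (th * x)) by (apply Rmult_le_compat_l; auto).
    assert ((J * ss sg / sg) * sin (th * x) <= (J * ss sg / sg) * ss sg) by (apply Rmult_le_compat_l; auto).
    lra. }
  assert (Hid : (1 + J * ss sg) * cc sg - (J * ss sg / sg) * ss sg = cc sg + J * (ss sg / sg)).
  { unfold cc, ss. field. nra. }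
  assert (Hcs : ss sg / sg <= cc sg).
  { unfold cc, ss. apply Rmult_le_reg_r with (sg * (sg ^ 2 + 1)). nra. field_simplify; nra. }
  assert (Hsp : 0 < ss sg / sg) by (apply Rdiv_lt_0_compat; lra).
  assert (Hf2 : f <= 1 + J).
  { unfold f. assert (0 <= 1 + J * ss sg) by nra.
    assert ((1 + J * ss sg) * cos (th * x) <= (1 + J * ss sg) * 1) by (apply Rmult_le_compat_l; auto).
    assert (0 <= (J * ss sg / sg) * sin (th * x)) by (apply Rmult_le_pos; auto).
    nra. }
  assert (Ht1 : t = J + x) by (unfold x, J; ring).
  rewrite Hpj. split.
  - apply Rmult_le_reg_r with (sg ^ n). auto. unfold Rdiv.
    rewrite !Rmult_assoc, Rinv_l, !Rmult_1_r by lra.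
    assert (w0 * ss sg / (2 * sg) * (1 + t) <= w0 * ((1 + J) * (ss sg / sg))).
    { unfold Rdiv. rewrite Ht1. assert (0 < w0 * ss sg * / sg) by (apply Rdiv_lt_0_compat; nra).
      replace (w0 * ss sg * / (2 * sg) * (1 + (J + x))) with ((w0 * ss sg * / sg) * ((1 + (J + x))/2)) by (field; lra).
      replace (w0 * ((1 + J) * (ss sg * / sg))) with ((w0 * ss sg * / sg) * (1 + J)) by (field; lra).
      apply Rmult_le_compat_l; lra. }
    unfold Rdiv in H. assert (w0 * ((1 + J) * (ss sg / sg)) <= w0 * f).
    { apply Rmult_le_compat_l; [lra|]. nra. }
    unfold Rdiv in H1. lra.
  - apply Rmult_le_reg_r with (sg ^ n). auto. unfold Rdiv.
    rewrite !Rmult_assoc, Rinv_l, !Rmult_1_r by lra.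
    assert (1 + J <= 1 + t) by lra. nra.
Qed.
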